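(* Let $p\geq 5$ be an odd integer. For any real number $x\geq 2$, \[ \left(\left(1-\frac{1}{4x}\right)^2+\frac{1}{8x^2}\right)^{-\frac1p-1}\left(1-\frac{1}{4x}\right)+\left(\left(1+\frac{1}{4x}\right)^2+\frac{1}{8x^2}\right)^{-\frac1p-1}\left(1+\frac{1}{4x}\right)<2. \] *)

(* Defs.v *)
From Stdlib Require Import Reals Lra Lia.

(* Main.v *)
Require Import Defs.
From Stdlib Require Import Reals Arith.
From Stdlib Require Import Lra Lia Psatz.
Open Scope R_scope.

Lemma bern (n : nat) (h : R) : -1 <= h -> 1 + INR n * h <= (1 + h) ^ n.
Proof.
  intro Hh. induction n as [|n IH].
  - simpl. lra.
  - rewrite S_INR. simpl.
    assert (0 <= 1 + h) by lra.
    assert (0 <= INR n) by apply pos_INR.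
    nra.
Qed.

Lemma root_bound (z : R) (n : nat) : 0 < z -> (1 <= n)%nat ->
  Rpower z (1 / INR n) <= 1 + (z - 1) / INR n.
Proof.
  intros Hz Hn.
  assert (Hn' : 1 <= INR n) by (apply (le_INR 1); exact Hn).
  set (w := Rpower z (1 / INR n)).
  assert (Hw : 0 < w) by (unfold w, Rpower; apply exp_pos).
  assert (Hwn : w ^ n = z).
  { rewrite <- Rpower_pow by exact Hw. unfold w. rewrite Rpower_mult.
    replace (1 / INR n * INR n) with 1 by (field; lra).
    apply Rpower_1; exact Hz. }
  pose proof (bern n (w - 1) ltac:(lra)) as B.
  replace (1 + (w - 1)) with w in B by ring. rewrite Hwn in B.
  apply (Rmult_le_reg_r (INR n)); [lra|].
  replace ((1 + (z - 1) / INR n) * INR n) with (INR n + (z - 1)) by (field; lra).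
  nra.
Qed.

Lemma rpow_split (y a : R) : 0 < y ->
  Rpower y (- a - 1) = / y * Rpower (/ y) a.
Proof.
  intro Hy. unfold Rpower. rewrite ln_Rinv by exact Hy.
  replace ((- a - 1) * ln y) with (- ln y + a * - ln y) by ring.
  rewrite exp_plus, exp_Ropp, exp_ln by exact Hy. reflexivity.
Qed.

Lemma poly_ineq (t a : R) : 0 < t -> 0 <= a <= 1/5 ->
  let A := 1 - 2*t + 3*t^2 in let B := 1 + 2*t + 3*t^2 in
  (1 - t) * (A + a * (1 - A)) * (B * B) + (1 + t) * (B + a * (1 - B)) * (A * A)
  < 2 * (A * A) * (B * B).
Proof.
  intros Ht Ha A B. unfold A, B.
  assert (E : 2 * ((1 - 2*t + 3*t^2) * (1 - 2*t + 3*t^2)) * ((1 + 2*t + 3*t^2) * (1 + 2*t + 3*t^2))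
    - ((1 - t) * ((1 - 2*t + 3*t^2) + a * (1 - (1 - 2*t + 3*t^2))) * ((1 + 2*t + 3*t^2) * (1 + 2*t + 3*t^2))
      + (1 + t) * ((1 + 2*t + 3*t^2) + a * (1 - (1 + 2*t + 3*t^2))) * ((1 - 2*t + 3*t^2) * (1 - 2*t + 3*t^2)))
    = t^2 * ((2 - 6*a) + t^2 * (22 + 28*a) + t^4 * (54 + 18*a) + 162 * t^6)) by ring.
  assert (0 < t^2) by (apply pow_lt; lra).
  assert (0 <= t^4) by (apply pow_le; lra).
  assert (0 <= t^6) by (apply pow_le; lra).
  assert (0 < (2 - 6*a) + t^2 * (22 + 28*a) + t^4 * (54 + 18*a) + 162 * t^6) by nra.
  nra.
Qed.

Theorem lemma4p1 (p : nat) (hp5 : (5 <= p)%nat) (hodd : Nat.Odd p) (x : R) (hx : 2 <= x) :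
  Rpower ((1 - 1 / (4 * x)) ^ 2 + 1 / (8 * x ^ 2)) (- (1 / INR p) - 1) * (1 - 1 / (4 * x))
  + Rpower ((1 + 1 / (4 * x)) ^ 2 + 1 / (8 * x ^ 2)) (- (1 / INR p) - 1) * (1 + 1 / (4 * x))
  < 2.
Proof.
  set (t := 1 / (4 * x)).
  assert (Ht : 0 < t <= 1/8).
  { unfold t. split. apply Rdiv_lt_0_compat; lra.
    apply (Rmult_le_reg_r (8 * x)); [lra|]. field_simplify; lra. }
  assert (E8 : 1 / (8 * x ^ 2) = 2 * t ^ 2) by (unfold t; field; lra).
  rewrite E8.
  set (A := (1 - t) ^ 2 + 2 * t ^ 2).
  set (B := (1 + t) ^ 2 + 2 * t ^ 2).
  assert (HA : A = 1 - 2*t + 3*t^2) by (unfold A; ring).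
  assert (HB : B = 1 + 2*t + 3*t^2) by (unfold B; ring).
  assert (Apos : 0 < A) by (rewrite HA; nra).
  assert (Bpos : 0 < B) by (rewrite HB; nra).
  rewrite !rpow_split by assumption.
  assert (Hp : 5 <= INR p) by (replace 5 with (INR 5) by (simpl; ring); apply le_INR; exact hp5).
  set (a := 1 / INR p).
  assert (Ha : 0 <= a <= 1/5).
  { unfold a. split. apply Rlt_le, Rdiv_lt_0_compat; lra.
    apply (Rmult_le_reg_r (5 * INR p)); [lra|]. field_simplify; lra. }
  assert (W1 : Rpower (/ A) (1 / INR p) <= 1 + a * (/ A - 1)).
  { pose proof (root_bound (/ A) p ltac:(apply Rinv_0_lt_compat; lra) ltac:(lia)).
    unfold a. replace (1 / INR p * (/ A - 1)) with ((/ A - 1) / INR p) by (field; lra). lra. }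
  assert (W2 : Rpower (/ B) (1 / INR p) <= 1 + a * (/ B - 1)).
  { pose proof (root_bound (/ B) p ltac:(apply Rinv_0_lt_compat; lra) ltac:(lia)).
    unfold a. replace (1 / INR p * (/ B - 1)) with ((/ B - 1) / INR p) by (field; lra). lra. }
  fold a in W1, W2 |- *.
  assert (Step : / A * Rpower (/ A) a * (1 - t) + / B * Rpower (/ B) a * (1 + t)
     <= / A * (1 + a * (/ A - 1)) * (1 - t) + / B * (1 + a * (/ B - 1)) * (1 + t)).
  { assert (0 < / A) by (apply Rinv_0_lt_compat; lra).
    assert (0 < / B) by (apply Rinv_0_lt_compat; lra).
    apply Rplus_le_compat; apply Rmult_le_compat_r; try lra;
    apply Rmult_le_compat_l; lra. }
  eapply Rle_lt_trans; [exact Step|].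
  pose proof (poly_ineq t a ltac:(lra) Ha) as P. cbv zeta in P.
  replace (/ A * (1 + a * (/ A - 1)) * (1 - t) + / B * (1 + a * (/ B - 1)) * (1 + t))
    with (((1 - t) * (A + a * (1 - A)) * (B * B) + (1 + t) * (B + a * (1 - B)) * (A * A))
          / ((A * A) * (B * B))) by (field; lra).
  apply (Rmult_lt_reg_r ((A * A) * (B * B))).
  { apply Rmult_lt_0_compat; apply Rmult_lt_0_compat; lra. }
  unfold Rdiv. rewrite Rmult_assoc, Rinv_l by (apply Rgt_not_eq, Rmult_lt_0_compat; apply Rmult_lt_0_compat; lra).
  rewrite HA, HB. lra.
Qed.
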